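(* For all $n\geq1$ and all formulas $\phi,\chi_1,\dots,\chi_n\in\mathcal{L}(\nabla,\bullet)$, $$\vdash_{\mathbf{K}^{\nabla\bullet}}\circ\Big(\bigwedge_{k=1}^n\chi_k\to\phi\Big)\land\bigwedge_{k=1}^n\circ(\neg\phi\to\chi_k)\to\circ\phi.$$
   Context: $\mathcal{L}(\nabla,\bullet)$: $\phi::=p\mid\neg\phi\mid\phi\land\phi\mid\nabla\phi\mid\bullet\phi$ over a nonempty set of propositional variables; $\Delta\phi:=\neg\nabla\phi$, $\circ\phi:=\neg\bullet\phi$. The Hilbert system $\mathbf{K}^{\nabla\bullet}$ has axioms: A0 all instances of propositional tautologies; A1 $\bullet\phi\to\phi$; A2 $\nabla\phi\leftrightarrow\nabla\neg\phi$; A3 $\bullet(\psi\to\phi)\land\phi\to\bullet\phi$; A4 $\nabla(\phi\land\psi)\to\nabla\phi\vee\nabla\psi$; A5 $\bullet(\phi\land\psi)\to\bullet\phi\vee\bullet\psi$; A6 $\nabla\phi\to\bullet\phi\vee\bullet\neg\phi$; A7 $\bullet(\phi\to\psi)\land\bullet(\neg\phi\to\chi)\to\nabla\phi$; and rules: R1 from $\phi$ infer $\Delta\phi$; R2 from $\phi$ infer $\circ\phi$; R3 from $\phi\leftrightarrow\psi$ infer $\Delta\phi\leftrightarrow\Delta\psi$; R4 from $\phi\leftrightarrow\psi$ infer $\circ\phi\leftrightarrow\circ\psi$; MP. *)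

(* Defs.v *)
From Stdlib Require Import List.
Import ListNotations.

Inductive form : Type :=
| Var : nat -> form
| Neg : form -> form
| And : form -> form -> form
| Nabla : form -> form
| Bullet : form -> form.

Definition Imp (p q : form) : form := Neg (And p (Neg q)).
Definition Or (p q : form) : form := Neg (And (Neg p) (Neg q)).
Definition Iff (p q : form) : form := And (Imp p q) (Imp q p).
Definition Delta (p : form) : form := Neg (Nabla p).
Definition Circ (p : form) : form := Neg (Bullet p).

(* Propositional tautologies: true under every valuation that treats
   variables and modal formulas (Nabla p, Bullet p) as atoms. *)
Fixpoint peval (v : form -> bool) (f : form) : bool :=
  match f with
  | Var _ => v f
  | Neg p => negb (peval v p)
  | And p q => andb (peval v p) (peval v q)
  | Nabla _ => v f
  | Bullet _ => v f
  end.

Definition tautology (f : form) : Prop := forall v : form -> bool, peval v f = true.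

Inductive derivable : form -> Prop :=
| A0 : forall f, tautology f -> derivable f
| A1 : forall p, derivable (Imp (Bullet p) p)
| A2 : forall p, derivable (Iff (Nabla p) (Nabla (Neg p)))
| A3 : forall p q, derivable (Imp (And (Bullet (Imp q p)) p) (Bullet p))
| A4 : forall p q, derivable (Imp (Nabla (And p q)) (Or (Nabla p) (Nabla q)))
| A5 : forall p q, derivable (Imp (Bullet (And p q)) (Or (Bullet p) (Bullet q)))
| A6 : forall p, derivable (Imp (Nabla p) (Or (Bullet p) (Bullet (Neg p))))
| A7 : forall p q r,
    derivable (Imp (And (Bullet (Imp p q)) (Bullet (Imp (Neg p) r))) (Nabla p))
| R1 : forall p, derivable p -> derivable (Delta p)
| R2 : forall p, derivable p -> derivable (Circ p)
| R3 : forall p q, derivable (Iff p q) -> derivable (Iff (Delta p) (Delta q))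
| R4 : forall p q, derivable (Iff p q) -> derivable (Iff (Circ p) (Circ q))
| MP : forall p q, derivable (Imp p q) -> derivable p -> derivable q.

Fixpoint bigwedge_from (chi : nat -> form) (k m : nat) : form :=
  (* conjunction of chi k, ..., chi (k + m) *)
  match m with
  | 0 => chi k
  | S m' => And (chi k) (bigwedge_from chi (S k) m')
  end.

Definition bigwedge (chi : nat -> form) (n : nat) : form :=
  bigwedge_from chi 1 (n - 1).

(* Main.v *)
Require Import Defs.

Ltac crush_bool :=
  repeat match goal with
  | |- context [peval ?v ?x] => destruct (peval v x)
  | |- context [?v (Bullet ?x)] => destruct (v (Bullet x))
  | |- context [?v (Nabla ?x)] => destruct (v (Nabla x))
  end; simpl; auto; try discriminate.

Lemma cons1 : forall a c, derivable a ->
  (forall v, peval v a = true -> peval v c = true) -> derivable c.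
Proof.
  intros a c Ha H. apply (MP a c); auto. apply A0. intro v.
  unfold Imp; simpl. specialize (H v).
  destruct (peval v a); destruct (peval v c); simpl; auto.
Qed.

Lemma cons2 : forall a b c, derivable a -> derivable b ->
  (forall v, peval v a = true -> peval v b = true -> peval v c = true) -> derivable c.
Proof.
  intros a b c Ha Hb H. apply (MP b c); auto. apply (MP a (Imp b c)); auto.
  apply A0. intro v. unfold Imp; simpl. specialize (H v).
  destruct (peval v a); destruct (peval v b); destruct (peval v c); simpl; auto.
Qed.

Lemma cons3 : forall a b c d, derivable a -> derivable b -> derivable c ->
  (forall v, peval v a = true -> peval v b = true -> peval v c = true -> peval v d = true) -> derivable d.
Proof.
  intros a b c d Ha Hb Hc H. apply (MP c d); auto. apply (MP b (Imp c d)); auto.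
  apply (MP a (Imp b (Imp c d))); auto.
  apply A0. intro v. unfold Imp; simpl. specialize (H v).
  destruct (peval v a); destruct (peval v b); destruct (peval v c); destruct (peval v d); simpl; auto.
Qed.

Lemma eval_D : forall v p chi m k,
  peval v (bigwedge_from (fun i => Imp (Neg p) (chi i)) k m)
  = orb (peval v p) (peval v (bigwedge_from chi k m)).
Proof.
  induction m; intros k; simpl.
  - unfold Imp; simpl. destruct (peval v p); destruct (peval v (chi k)); auto.
  - rewrite IHm. unfold Imp; simpl.
    destruct (peval v p); destruct (peval v (chi k)); auto.
Qed.

Lemma key : forall (D : nat -> form) m k A,
  derivable (Imp (And (Circ A) (bigwedge_from (fun i => Circ (D i)) k m))
                 (Circ (And A (bigwedge_from D k m)))).
Proof.
  induction m; intros k A; simpl.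
  - apply (cons1 _ _ (A5 A (D k))). intros v. unfold Imp, Or, Circ; simpl.
    revert v. intro v. crush_bool.
  - specialize (IHm (S k) (And A (D k))).
    assert (H4 : derivable (Iff (Circ (And (And A (D k)) (bigwedge_from D (S k) m)))
                    (Circ (And A (And (D k) (bigwedge_from D (S k) m)))))).
    { apply R4. apply A0. intro v. unfold Iff, Imp; simpl. crush_bool. }
    assert (H5 := A5 A (D k)).
    apply (cons3 _ _ _ _ H5 H4 IHm). intro v. unfold Iff, Imp, Or, Circ; simpl.
    crush_bool.
Qed.

Theorem proposition9 :
  forall (n : nat) (phi : form) (chi : nat -> form),
    1 <= n ->
    derivable
      (Imp (And (Circ (Imp (bigwedge chi n) phi))
                (bigwedge (fun k => Circ (Imp (Neg phi) (chi k))) n))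
           (Circ phi)).
Proof.
  intros n phi chi _. unfold bigwedge.
  set (X := bigwedge_from chi 1 (n - 1)).
  assert (H1 : derivable (Iff (Circ phi) (Circ (And (Imp X phi)
             (bigwedge_from (fun i => Imp (Neg phi) (chi i)) 1 (n - 1)))))).
  { apply R4. apply A0. intro v. pose proof (eval_D v phi chi (n - 1) 1) as E.
    unfold Iff, Imp in *; simpl in *. rewrite E. fold X. crush_bool. }
  assert (H2 := key (fun i => Imp (Neg phi) (chi i)) (n - 1) 1 (Imp X phi)).
  apply (cons2 _ _ _ H1 H2). intro v. unfold Iff, Imp, Circ; simpl. crush_bool.
Qed.
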